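(* Let $\mathcal{S} \subseteq M_n$ be a quantum graph. Then $\mathcal{S}$ is $(n-1)$-connected if and only if $A\mathcal{S}B \neq \{0\}$ for every $A,B \in M_n\setminus\{0\}$.
   Context: A quantum graph on $M_n$ is a linear subspace $\mathcal{S}\subseteq M_n$ closed under adjoints and containing $I_n$. $A\mathcal{S}B=\{AXB: X\in\mathcal{S}\}$. A quantum graph $\mathcal{T}\subseteq M_N$ is connected if $\mathcal{T}^m=M_N$ for some $m\in\mathbb{N}$ (powers are spans of products); otherwise disconnected. For a projection $P\in M_n$, $(I_n-P)\mathcal{S}(I_n-P)$ is regarded as a quantum graph in $(I_n-P)M_n(I_n-P)\cong M_{n-\operatorname{rank}(P)}$. A projection $P$ is a separator of $\mathcal{S}$ if $(I_n-P)\mathcal{S}(I_n-P)$ is either disconnected or $1$-dimensional; $\mathcal{S}$ is $k$-connected if every separator has rank at least $k$. *)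

(* Defs.v *)
From HB Require Import structures.
From mathcomp Require Import all_boot all_order all_algebra.
From mathcomp Require Import reals.
From mathcomp.real_closed Require Import complex.
Set Implicit Arguments. Unset Strict Implicit. Unset Printing Implicit Defensive.
Import Order.TTheory GRing.Theory Num.Theory.
Local Open Scope ring_scope.

Section QG.
Variables (R : realType) (n : nat).
Local Notation C := (R[i]).
Local Notation M := ('M[C]_n).

Definition adjmx (X : M) : M := (map_mx Num.conj X)^T.

Definition quantum_graph (S : {vspace M}) : Prop :=
  (forall X, X \in S -> adjmx X \in S) /\ (1%:M \in S).

Definition projection (P : M) : Prop := P *m P = P /\ adjmx P = P.

Definition sandwich (A B : M) (S : {vspace M}) : {vspace M} :=
  (linfun (fun X : M => A *m X *m B) @: S)%VS.

Definition in_power (T : {vspace M}) (m : nat) (Y : M) : Prop :=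
  exists K (c : 'I_K -> C) (X : 'I_K -> 'I_m -> M),
    (forall k j, X k j \in T) /\ Y = \sum_(k < K) c k *: \prod_(j < m) X k j.

(* Connectedness of the compression T = Q S Q, regarded as a quantum graph in
   the corner algebra Q M_n Q (~ M_(rank Q)) whose full algebra is Q M_n Q:
   T^m = Q M_n Q for some m >= 1. *)
Definition corner_connected (Q : M) (T : {vspace M}) : Prop :=
  exists2 m, (0 < m)%N &
    forall Y : M, (exists Z : M, Y = Q *m Z *m Q) <-> in_power T m Y.

Definition separator (S : {vspace M}) (P : M) : Prop :=
  projection P /\
  let Q := 1%:M - P in
  let T := sandwich Q Q S in
  ~ corner_connected Q T \/ \dim T = 1%N.

Definition k_connected (S : {vspace M}) (k : nat) : Prop :=
  forall P : M, separator S P -> (k <= \rank P)%N.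

End QG.

(* Main.v *)
Require Import Defs.
From HB Require Import structures.
From mathcomp Require Import all_boot all_order all_algebra falgebra.
From mathcomp Require Import reals.
From mathcomp.real_closed Require Import complex.
From Stdlib Require Import Classical.
From mathcomp Require Import zify.
Set Implicit Arguments. Unset Strict Implicit. Unset Printing Implicit Defensive.
Import Order.TTheory GRing.Theory Num.Theory.
Local Open Scope ring_scope.

Section Gen.
Variable F : fieldType.

Lemma nz_col m n (A : 'M[F]_(m, n)) : A != 0 -> exists j : 'I_n, A *m (delta_mx j 0 : 'cV[F]_n) != 0.
Proof.
move=> nzA; apply: NNPP => H; move/negP: nzA; apply; apply/eqP/matrixP=> i j.
have /eqP: A *m (delta_mx j 0 : 'cV[F]_n) == 0 by apply/negPn/negP=> h; apply: H; exists j.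
move/matrixP/(_ i 0); rewrite -colE !mxE => ->; done.
Qed.

Lemma nz_row m n (A : 'M[F]_(m, n)) : A != 0 -> exists i : 'I_m, row i A != 0.
Proof.
move=> nzA; apply: NNPP => H; move/negP: nzA; apply; apply/eqP/matrixP=> i j.
have /eqP: row i A == 0 by apply/negPn/negP=> h; apply: H; exists i.
move/matrixP/(_ 0 j); rewrite !mxE => ->; done.
Qed.

Lemma colv_rowv_eq0 n (w : 'cV[F]_n) (v : 'rV[F]_n) : v != 0 -> w *m v = 0 -> w = 0.
Proof.
move=> nzv /matrixP H; have [j nzj] : exists j, v 0 j != 0.
  apply: NNPP => H'; move/negP: nzv; apply; apply/eqP/matrixP=> a j.
  rewrite (ord1 a) mxE; apply/eqP/negPn/negP=> h; apply: H'; exists j; done.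
apply/matrixP=> i a; rewrite (ord1 a) mxE; have := H i j.
rewrite !mxE big_ord1 => /eqP; rewrite mulf_eq0 (negbTE nzj) orbF => /eqP; done.
Qed.

Lemma colv_rowv_eq0r n (w : 'cV[F]_n) (v : 'rV[F]_n) : w != 0 -> w *m v = 0 -> v = 0.
Proof.
move=> nzw /matrixP H; have [i nzi] : exists i, w i 0 != 0.
  apply: NNPP => H'; move/negP: nzw; apply; apply/eqP/matrixP=> i a.
  rewrite (ord1 a) mxE; apply/eqP/negPn/negP=> h; apply: H'; exists i; done.
apply/matrixP=> a j; rewrite (ord1 a) mxE; have := H i j.
rewrite !mxE big_ord1 => /eqP; rewrite mulf_eq0 (negbTE nzi) /= => /eqP; done.
Qed.

Lemma sep_row m n (y : 'rV[F]_n) (W : 'M[F]_(m, n)) :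
  ~~ (y <= W)%MS -> exists c : 'cV_n, W *m c = 0 /\ y *m c != 0.
Proof.
rewrite submxE => H; have [j Hj] := nz_col H.
exists (cokermx W *m delta_mx j 0); split; first by rewrite mulmxA mulmx_coker mul0mx.
by rewrite mulmxA.
Qed.

Lemma L_ab n (K : 'M[F]_n) : (2 <= \rank K)%N ->
  exists (c : 'cV_n) (d : 'rV_n), K *m c != 0 /\ d *m K != 0 /\ d *m K *m c = 0.
Proof.
move=> rK; have nzK : K != 0 by rewrite -mxrank_eq0 -lt0n (leq_trans _ rK).
have [j Hj] := nz_col nzK; set b := K *m delta_mx j 0 in Hj.
have nsub : ~~ (kermx b <= kermx K)%MS.
  apply/negP=> /mxrankS; rewrite !mxrank_ker.
  have := rank_leq_col b; have := rank_leq_row K; move: rK.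
  move: (\rank b) (\rank K) => x y; lia.
have [i Hi] := row_subPn nsub.
exists (delta_mx j 0), (row i (kermx b)); split=> //; split.
  by apply: contra Hi => /eqP H; apply/sub_kermxP.
by rewrite -mulmxA; apply/sub_kermxP; apply: row_sub.
Qed.

Lemma rank1_factor n (K : 'M[F]_n) : \rank K = 1%N ->
  exists (u : 'cV_n) (v : 'rV_n), [/\ K = u *m v, u != 0 & v != 0].
Proof.
move=> rK; have nzK : K != 0 by rewrite -mxrank_eq0 rK.
have [i Hi] := nz_row nzK; set v := row i K in Hi.
have sv : (v <= K)%MS by apply: row_sub.
have rv : \rank v = 1%N.
  apply/eqP; rewrite eqn_leq rank_leq_row lt0n mxrank_eq0 Hi; done.
have := mxrank_leqif_sup sv; rewrite rK rv => /leqifP; rewrite eqxx.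
case: ifP => // sKv _; have [D eqK] := submxP sKv.
exists D, v; split=> //; apply: contra nzK => /eqP D0; by rewrite eqK D0 mul0mx.
Qed.

Lemma lfun_sw n (A B X : 'M[F]_n) : linfun (fun Z : 'M[F]_n => A *m Z *m B) X = A *m X *m B.
Proof.
change (linfun (mulmxr B \o mulmx A)%FUN X = A *m X *m B).
by rewrite lfunE.
Qed.

End Gen.

Lemma stable_eig (C : numClosedFieldType) n (V G : 'M[C]_n) : V != 0 ->
  (V *m G <= V)%MS -> exists (w : 'rV_n) (l : C), [/\ w != 0, (w <= V)%MS & w *m G = l *: w].
Proof.
move=> nzV sV; have r0 : (0 < \rank V)%N by rewrite lt0n mxrank_eq0.
have [a /eigenvalueP [v' Hv' nzv']] := eigenvalue_closed (restrictmx V G) r0.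
have st : (v' *m restrictmx V G <= v')%MS by rewrite Hv' scalemx_sub.
rewrite stablemx_restrict // in st.
have /eigenvectorP [l /eigenspaceP Hl] := st.
exists (v' *m row_base V), l; split=> //.
- by rewrite mulmx_free_eq0 ?row_base_free.
- by rewrite (submx_trans (submxMl _ _)) // eq_row_base.
Qed.

Section Burnside.
Variables (C : numClosedFieldType) (n : nat) (A : {vspace 'M[C]_n}) (Q : 'M[C]_n).
Hypothesis mulA : forall X Y, X \in A -> Y \in A -> X *m Y \in A.
Hypothesis cornA : forall X, X \in A -> Q *m X = X /\ X *m Q = X.
Hypothesis QA : Q \in A.
Hypothesis cond : forall (a : 'rV_n) (b : 'cV_n), a != 0 -> b != 0 ->
  a *m Q = a -> Q *m b = b -> exists2 X, X \in A & a *m X *m b != 0.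

Let QQ : Q *m Q = Q. Proof. by have [] := cornA QA. Qed.

Let B := vbasis A.

Lemma span_basis (w : 'rV_(\dim A)) : \sum_i w 0 i *: B`_i \in A.
Proof. by apply: memv_suml => i _; rewrite memvZ // vbasis_mem // memt_nth. Qed.

Lemma row_trans (a y : 'rV_n) : a != 0 -> a *m Q = a -> y *m Q = y ->
  exists2 X, X \in A & a *m X = y.
Proof.
move=> nza aQ yQ.
pose Wa : 'M_(\dim A, n) := \matrix_i (a *m B`_i).
have [sy|nsy] := boolP (y <= Wa)%MS.
  have [w ->] := submxP sy; exists (\sum_i w 0 i *: B`_i); first exact: span_basis.
  rewrite mulmx_sumr [w *m _]mulmx_sum_row; apply: eq_bigr => i _.
  by rewrite rowK scalemxAr.
have [c [Wc yc]] := sep_row nsy.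
have nzb : Q *m c != 0 by apply: contra yc => /eqP h; rewrite -yQ -mulmxA h mulmx0.
have Qb : Q *m (Q *m c) = Q *m c by rewrite mulmxA QQ.
have [X XA] := cond nza nzb aQ Qb.
have [_ XQ] := cornA XA; rewrite mulmxA -(mulmxA a) XQ.
rewrite (coord_vbasis XA) mulmx_sumr mulmx_suml; case/negP; apply/eqP.
apply: big1 => i _; rewrite -scalemxAr -scalemxAl.
have -> : a *m B`_i *m c = 0 by have := congr1 (row i) Wc; rewrite row_mul rowK row0.
by rewrite scaler0.
Qed.

Lemma col_trans (b x : 'cV_n) : b != 0 -> Q *m b = b -> Q *m x = x ->
  exists2 X, X \in A & X *m b = x.
Proof.
move=> nzb Qb Qx.
pose Wb : 'M_(\dim A, n) := \matrix_i ((B`_i *m b)^T).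
have [sy|nsy] := boolP (x^T <= Wb)%MS.
  have [w ew] := submxP sy; exists (\sum_i w 0 i *: B`_i); first exact: span_basis.
  apply: trmx_inj; rewrite ew mulmx_sum_row mulmx_suml raddf_sum /=; apply: eq_bigr => i _.
  by rewrite rowK -scalemxAl linearZ.
have [c [Wc yc]] := sep_row nsy.
have nza : c^T *m Q != 0.
  apply: contra yc => /eqP h; rewrite -Qx -trmx_eq0 !trmx_mul trmxK mulmxA h mul0mx //.
have aQ : c^T *m Q *m Q = c^T *m Q by rewrite -mulmxA QQ.
have [X XA] := cond nza nzb aQ Qb.
have [QX _] := cornA XA; rewrite -(mulmxA _ Q) QX.
rewrite (coord_vbasis XA) mulmx_sumr mulmx_suml; case/negP; apply/eqP.
apply: big1 => i _; rewrite -scalemxAr -scalemxAl.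
have -> : c^T *m B`_i *m b = 0.
  have := congr1 (row i) Wc; rewrite row_mul rowK row0 => h.
  apply: trmx_inj; rewrite trmx0 trmx_mul trmx_mul trmxK mulmxA -trmx_mul; exact h.
by rewrite scaler0.
Qed.


Lemma min_rank_aux N K : K \in A -> K != 0 -> (\rank K <= N)%N ->
  exists K0, [/\ K0 \in A, K0 != 0 &
    forall K', K' \in A -> K' != 0 -> (\rank K0 <= \rank K')%N].
Proof.
elim: N K => [|N IH] K KA nzK rK.
  by move: nzK; rewrite -mxrank_eq0; move: rK; case: (\rank K).
case: (classic (exists K', [/\ K' \in A, K' != 0 & (\rank K' < \rank K)%N])).
  case=> K' [K'A nzK' lt]; apply: (IH K') => //; move: lt rK; lia.
move=> H; exists K; split=> // K' K'A nzK'; rewrite leqNgt; apply/negP=> lt.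
by apply: H; exists K'.
Qed.

Lemma min_rank1 K : K \in A -> K != 0 ->
  (forall K', K' \in A -> K' != 0 -> (\rank K <= \rank K')%N) -> \rank K = 1%N.
Proof.
move=> KA nzK Kmin.
have r1 : (1 <= \rank K)%N by rewrite lt0n mxrank_eq0.
case: (boolP (\rank K == 1%N)) => [/eqP //|ne1].
have r2 : (2 <= \rank K)%N by move: r1 ne1; case: (\rank K) => [|[|k]].
have key : forall X, X \in A -> exists l, K *m X *m K = l *: K.
  move=> X XA.
  have st : (K *m (X *m K) <= K)%MS by rewrite mulmxA submxMl.
  have [w [l [nzw wK wG]]] := stable_eig nzK st.
  exists l; apply/eqP; rewrite -subr_eq0; apply/negP => nzZ.
  have ZA : K *m X *m K - l *: K \in A by rewrite memvB ?memvZ ?mulA.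
  have := Kmin _ ZA (introN idP nzZ).
  have -> : K *m X *m K - l *: K = K *m (X *m K - l%:M).
    by rewrite mulmxBr mul_mx_scalar mulmxA.
  have := mxrank_mul_ker K (X *m K - l%:M).
  have wk : (w <= K :&: kermx (X *m K - l%:M))%MS.
    rewrite sub_capmx wK /=; apply/sub_kermxP.
    by rewrite mulmxBr mul_mx_scalar wG subrr.
  have := mxrankS wk; have : (1 <= \rank w)%N by rewrite lt0n mxrank_eq0.
  move=> h1 h2 h3 h4; move: h1 h2 h3 h4; set p := \rank (K :&: _); set q := \rank (K *m _); lia.
have [c [d [nzc [nzd dKc]]]] := L_ab r2.
have [QK KQ] := cornA KA.
have aQ : d *m K *m Q = d *m K by rewrite -mulmxA KQ.
have Qb : Q *m (K *m c) = K *m c by rewrite mulmxA QK.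
have [X XA nz] := cond nzd nzc aQ Qb.
have [l el] := key X XA.
exfalso; move/negP: nz; apply.
have -> : d *m K *m X *m (K *m c) = d *m (K *m X *m K) *m c by rewrite !mulmxA.
by rewrite el -scalemxAr -scalemxAl dKc scaler0.
Qed.

Lemma rank_one_in (x : 'cV_n) (y : 'rV_n) : Q *m x = x -> y *m Q = y -> x *m y \in A.
Proof.
move=> Qx yQ.
case: (eqVneq Q 0) => [Q0|nzQ].
  by rewrite -Qx Q0 mul0mx mul0mx mem0v.
have [K0 [K0A nzK0 K0min]] := @min_rank_aux (\rank Q) Q QA nzQ (leqnn _).
have [u [v [eK nzu nzv]]] := rank1_factor (min_rank1 K0A nzK0 K0min).
have [QK KQ] := cornA K0A.
have Qu : Q *m u = u.
  apply/eqP; rewrite -subr_eq0; apply/eqP; apply: (colv_rowv_eq0 nzv).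
  by rewrite mulmxBl -mulmxA -eK QK subrr.
have vQ : v *m Q = v.
  apply/eqP; rewrite -subr_eq0; apply/eqP; apply: (colv_rowv_eq0r nzu).
  by rewrite mulmxBr mulmxA -eK KQ subrr.
have [X XA Xu] := col_trans nzu Qu Qx.
have [Y YA vY] := row_trans nzv vQ yQ.
have -> : x *m y = X *m K0 *m Y by rewrite eK mulmxA Xu -mulmxA vY.
by rewrite !mulA.
Qed.

Lemma corner_in (Z : 'M[C]_n) : Q *m Z *m Q \in A.
Proof.
rewrite [Z]matrix_sum_delta mulmx_sumr mulmx_suml; apply: memv_suml => i _.
rewrite mulmx_sumr mulmx_suml; apply: memv_suml => j _.
rewrite -scalemxAr -scalemxAl memvZ //.
have -> : Q *m delta_mx i j *m Q = (Q *m (delta_mx i 0 : 'cV_n)) *m ((delta_mx 0 j : 'rV_n) *m Q).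
  by rewrite -(mul_delta_mx (0 : 'I_1)) !mulmxA.
by apply: rank_one_in; rewrite ?mulmxA ?QQ // -mulmxA QQ.
Qed.

End Burnside.

Section Pow.
Variables (R : realType) (n : nat).
Local Notation C := (R[i]).
Local Notation M := ('M[C]_n.+1).
Variable T : {vspace M}.

Lemma prod_mem m (f : 'I_m -> M) : (forall j, f j \in T) -> \prod_(j < m) f j \in (T ^+ m)%VS.
Proof.
elim: m f => [|m IH] f fT; first by rewrite big_ord0 expv0 memv_line.
by rewrite big_ord_recl expvSl memv_mul // IH.
Qed.

Lemma in_power_mem m Y : in_power T m Y -> Y \in (T ^+ m)%VS.
Proof.
case=> K [c [X [XT ->]]]; apply: memv_suml => k _; rewrite memvZ //.
exact: prod_mem.
Qed.

Lemma in_power0 m : in_power T m 0.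
Proof.
exists 0%N, (fun _ => 0), (fun _ _ => 0); split; last by rewrite big_ord0.
by move=> [].
Qed.

Lemma in_powerD m Y1 Y2 : in_power T m Y1 -> in_power T m Y2 -> in_power T m (Y1 + Y2).
Proof.
case=> K1 [c1 [X1 [XT1 ->]]]; case=> K2 [c2 [X2 [XT2 ->]]].
exists (K1 + K2)%N, (fun k => match split k with inl i => c1 i | inr i => c2 i end),
  (fun k => match split k with inl i => X1 i | inr i => X2 i end); split.
  by move=> k j; case: (split k).
rewrite big_split_ord /=; congr (_ + _); apply: eq_bigr => i _.
  by have := unsplitK (inl i : 'I_K1 + 'I_K2); rewrite /= => ->.
by have := unsplitK (inr i : 'I_K1 + 'I_K2); rewrite /= => ->.
Qed.

Lemma in_powerZ m a Y : in_power T m Y -> in_power T m (a *: Y).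
Proof.
case=> K [c [X [XT ->]]]; exists K, (fun k => a * c k), X; split=> //.
by rewrite scaler_sumr; apply: eq_bigr => k _; rewrite scalerA.
Qed.

Lemma in_power_sum m (I : finType) (F : I -> M) :
  (forall i, in_power T m (F i)) -> in_power T m (\sum_i F i).
Proof.
move=> H; apply: (big_ind (in_power T m)) => //; [exact: in_power0 | exact: in_powerD].
Qed.

Lemma in_powerMl m Y Z : Y \in T -> in_power T m Z -> in_power T m.+1 (Y * Z).
Proof.
move=> YT; case=> K [c [X [XT ->]]].
exists K, c, (fun k j => match unlift ord0 j with None => Y | Some j' => X k j' end); split.
  by move=> k j; case: (unlift ord0 j).
rewrite mulr_sumr; apply: eq_bigr => k _; rewrite -scalerAr big_ord_recl unlift_none.
by congr (_ *: (_ * _)); apply: eq_bigr => j _; rewrite liftK.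
Qed.

Lemma mem_in_power m Y : Y \in (T ^+ m.+1)%VS -> in_power T m.+1 Y.
Proof.
elim: m Y => [|m IH] Y.
  rewrite expv1 => YT; exists 1%N, (fun _ => 1), (fun _ _ => Y); split=> //.
  by rewrite big_ord1 big_ord1 scale1r.
rewrite expvSl unlock => /coord_span ->.
apply: in_power_sum => i; apply: in_powerZ.
set s := allpairs_tuple _ _ _.
have /allpairsP [[u v] [/= uT vT ->]] : s`_i \in s by rewrite mem_nth // size_tuple.
by apply: in_powerMl; [exact: vbasis_mem | apply: IH; exact: vbasis_mem].
Qed.

End Pow.

Lemma stab_chain (K : fieldType) (vT : vectType K) (V : nat -> {vspace vT}) :
  (forall k, V k <= V k.+1)%VS -> exists k, V k = V k.+1.
Proof.
move=> mono; apply: NNPP => H.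
have grow : forall k, (k <= \dim (V k))%N.
  elim=> [//|k IH].
  have [le eqq] := dimv_leqif_eq (mono k).
  have ne : (V k == V k.+1) = false by apply/negP => /eqP h; apply: H; exists k.
  rewrite ne in eqq; move/negbT: eqq => eqq.
  have lt : (\dim (V k) < \dim (V k.+1))%N by rewrite ltn_neqAle eqq le.
  exact: leq_ltn_trans IH lt.
have := grow (\dim (fullv : {vspace vT})).+1.
have := dimvS (subvf (V (\dim (fullv : {vspace vT})).+1)).
lia.
Qed.

Section Conn.
Variables (R : realType) (n : nat).
Local Notation C := (R[i]).
Local Notation M := ('M[C]_n.+1).

Lemma connected_of (Q : M) (T : {vspace M}) :
  Q *m Q = Q -> Q \in T -> (forall Y, Y \in T -> Q *m Y *m Q = Y) ->
  (forall (a : 'rV_n.+1) (b : 'cV_n.+1), a != 0 -> b != 0 -> a *m Q = a -> Q *m b = b ->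
     exists2 Y, Y \in T & a *m Y *m b != 0) ->
  corner_connected Q T.
Proof.
move=> QQ QT TC condT.
pose V k := (T ^+ k.+1)%VS.
pose Cor := (linfun (fun Z : M => Q *m Z *m Q) @: fullv)%VS.
have memCor : forall Y, Y \in Cor <-> Q *m Y *m Q = Y.
  move=> Y; split.
    by case/memv_imgP=> Z _ ->; rewrite lfun_sw -!mulmxA QQ !mulmxA QQ.
  by move=> h; apply/memv_imgP; exists Y; rewrite ?memvf // lfun_sw h.
have CorL : forall Y, Y \in Cor -> Q *m Y = Y.
  by move=> Y /memCor h; rewrite -h !mulmxA QQ.
have CorR : forall Y, Y \in Cor -> Y *m Q = Y.
  by move=> Y /memCor h; rewrite -h -!mulmxA QQ.
have VCor : forall k, (V k <= Cor)%VS.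
  elim=> [|k IH]; first by apply/subvP => Y /TC /memCor.
  rewrite /V expvSl; apply/prodvP => u v uT vV.
  have uC : u \in Cor by apply/memCor; exact: TC.
  have vC : v \in Cor by exact: (subvP IH).
  by apply/memCor; rewrite -mulmxE mulmxA CorL // -mulmxA CorR.
have mono : forall k, (V k <= V k.+1)%VS.
  move=> k; rewrite /V (expvSr _ k.+1); apply/subvP => Y YV.
  have -> : Y = Y * Q by rewrite -mulmxE CorR // (subvP (VCor k)).
  exact: memv_mul.
have [k Vk] := stab_chain mono.
pose A := V k.
have Vkj : forall j, V (j + k)%N = A.
  elim=> [//|j IH]; rewrite /V addSn expvSr -/(V (j + k)%N) IH /A /V -expvSr; exact: esym.
have mulA : forall X Y, X \in A -> Y \in A -> X *m Y \in A.
  move=> X Y XA YA; rewrite mulmxE; have := memv_mul XA YA; rewrite /A /V -expvD.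
  move=> h; have e := Vkj k.+1; rewrite /A /V in e; rewrite -e -addnS; exact: h.
have cornA : forall X, X \in A -> Q *m X = X /\ X *m Q = X.
  by move=> X XA; have XC := subvP (VCor k) X XA; split; [exact: CorL | exact: CorR].
have TA : (T <= A)%VS.
  have : forall j, (V 0%N <= V j)%VS.
    by elim=> [|j IH]; [exact: subvv | exact: subv_trans IH (mono j)].
  by move/(_ k).
have QA : Q \in A by exact: (subvP TA).
have condA : forall (a : 'rV_n.+1) (b : 'cV_n.+1), a != 0 -> b != 0 -> a *m Q = a -> Q *m b = b ->
     exists2 X, X \in A & a *m X *m b != 0.
  move=> a b na nb aQ Qb; have [Y YT nz] := condT a b na nb aQ Qb.
  by exists Y => //; exact: (subvP TA).
exists k.+1 => // Y; split.
  by case=> Z ->; apply: mem_in_power; exact: (corner_in mulA cornA QA condA).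
move/in_power_mem => YV; exists Y; apply/esym/memCor; exact: (subvP (VCor k)).
Qed.

End Conn.

Section Adj.
Variable R : realType.
Local Notation C := (R[i]).

Definition adj p q (X : 'M[C]_(p, q)) : 'M[C]_(q, p) := (map_mx Num.conj X)^T.

Lemma adjE p q (X : 'M[C]_(p, q)) i j : adj X i j = (X j i)^*.
Proof. by rewrite /adj !mxE. Qed.

Lemma adjM p q r (X : 'M[C]_(p, q)) (Y : 'M[C]_(q, r)) : adj (X *m Y) = adj Y *m adj X.
Proof. by rewrite /adj map_mxM trmx_mul. Qed.

Lemma adjK p q (X : 'M[C]_(p, q)) : adj (adj X) = X.
Proof. by apply/matrixP=> i j; rewrite !mxE conjCK. Qed.

Lemma adjZ p q c (X : 'M[C]_(p, q)) : adj (c *: X) = c^* *: adj X.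
Proof. by apply/matrixP=> i j; rewrite !mxE rmorphM. Qed.

Lemma adjD p q (X Y : 'M[C]_(p, q)) : adj (X + Y) = adj X + adj Y.
Proof. by apply/matrixP=> i j; rewrite !mxE rmorphD. Qed.

Lemma adjB p q (X Y : 'M[C]_(p, q)) : adj (X - Y) = adj X - adj Y.
Proof. by apply/matrixP=> i j; rewrite !mxE rmorphB. Qed.

Lemma adj1 p : adj (1%:M : 'M[C]_p) = 1%:M.
Proof. by rewrite /adj map_mx1 trmx1. Qed.

Lemma adj0 p q : adj (0 : 'M[C]_(p, q)) = 0.
Proof. by apply/matrixP=> i j; rewrite !mxE rmorph0. Qed.

Lemma norm_row_nz p (a : 'rV[C]_p) : a != 0 -> (a *m adj a) 0 0 != 0.
Proof.
move=> nza; apply/negP => /eqP H; move/negP: nza; apply; apply/eqP/matrixP => i j.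
rewrite (ord1 i) mxE; move: H; rewrite mxE.
under eq_bigr => k _ do rewrite /adj !mxE -normCK.
move=> H; have := @psumr_eq0P _ _ _ _ (fun k _ => exprn_ge0 2 (normr_ge0 (a 0 k))) H j isT.
by move/eqP; rewrite sqrf_eq0 normr_eq0 => /eqP ->; rewrite ?mxE.
Qed.

Lemma norm_col_nz p (b : 'cV[C]_p) : b != 0 -> (adj b *m b) 0 0 != 0.
Proof.
move=> nzb; have : adj b != 0.
  by apply: contra nzb => /eqP h; rewrite -[b]adjK h adj0.
by move/norm_row_nz; rewrite adjK.
Qed.

End Adj.

Section Sep.
Variables (R : realType) (n : nat).
Local Notation C := (R[i]).
Local Notation M := ('M[C]_n).

Lemma row_prod_eig (a : 'rV[C]_n) m (f : 'I_m -> M) :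
  (forall j, exists g, a *m f j = g *: a) -> exists g, a *m \prod_(j < m) f j = g *: a.
Proof.
elim: m f => [|m IH] f H.
  exists 1; rewrite big_ord0 scale1r; exact: mulmx1.
have [g1 e1] := H ord0; have [g2 e2] := IH (fun j => f (lift ord0 j)) (fun j => H _).
exists (g1 * g2); rewrite big_ord_recl -mulmxE mulmxA e1 -scalemxAl mulmxE e2 scalerA //.
Qed.

Lemma sep_construct (S : {vspace M}) (a : 'rV[C]_n) (b : 'cV[C]_n) :
  a != 0 -> b != 0 -> (forall X, X \in S -> a *m X *m b = 0) -> 1%:M \in S ->
  exists P, separator S P /\ (\rank P + 2 <= n)%N.
Proof.
move=> nza nzb aSb S1.
have ab : a *m b = 0 by rewrite -(aSb _ S1) mulmx1.
set e := adj a.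
set al := (a *m e) 0 0; set be := (adj b *m b) 0 0.
have nzal : al != 0 by apply: norm_row_nz.
have nzbe : be != 0 by apply: norm_col_nz.
have ae : a *m e = al%:M by rewrite [LHS]mx11_scalar.
have bb : adj b *m b = be%:M by rewrite [LHS]mx11_scalar.
have be0 : adj b *m e = 0 by rewrite /e -adjM ab adj0.
pose Q := al^-1 *: (e *m a) + be^-1 *: (b *m adj b).
have aQ : a *m Q = a.
  rewrite mulmxDr -!scalemxAr !mulmxA ae ab mul0mx scaler0 addr0 mul_scalar_mx scalerA.
  by rewrite mulVf // scale1r.
have Qb : Q *m b = b.
  rewrite mulmxDl -!scalemxAl -!mulmxA ab bb mulmx0 scaler0 add0r mul_mx_scalar scalerA.
  by rewrite mulVf // scale1r.
have bQ : adj b *m Q = adj b.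
  rewrite mulmxDr -!scalemxAr !mulmxA be0 bb mul0mx scaler0 add0r mul_scalar_mx scalerA.
  by rewrite mulVf // scale1r.
have QQ : Q *m Q = Q.
  rewrite {1}/Q mulmxDl -!scalemxAl -!mulmxA aQ bQ //.
have alr : al^* = al.
  have h : adj (a *m e) = a *m e by rewrite adjM adjK.
  by have := congr1 (fun X : 'M[C]_1 => X 0 0) h; rewrite /= adjE.
have ber : be^* = be.
  have h : adj (adj b *m b) = adj b *m b by rewrite adjM adjK.
  by have := congr1 (fun X : 'M[C]_1 => X 0 0) h; rewrite /= adjE.
have adjQ : adj Q = Q.
  rewrite /Q adjD !adjZ !adjM /e !adjK !fmorphV; congr (_^-1 *: _ + _^-1 *: _); [exact: alr | exact: ber].
pose P := 1%:M - Q.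
have eQ : 1%:M - P = Q by rewrite /P opprB addrC subrK.
have aP : a *m P = 0 by rewrite /P mulmxBr mulmx1 aQ subrr.
have bP : adj b *m P = 0 by rewrite /P mulmxBr mulmx1 bQ subrr.
have rf : row_free (col_mx a (adj b)).
  rewrite -kermx_eq0; apply/rowV0P => v /sub_kermxP hv.
  rewrite -[v]hsubmxK in hv *; rewrite mul_row_col in hv.
  set l := lsubmx v in hv *; set r := rsubmx v in hv *.
  have l0 : l = 0.
    have := congr1 (mulmx^~ e) hv; rewrite /= mulmxDl -!mulmxA ae be0 mulmx0 addr0 mul0mx.
    by rewrite mul_mx_scalar => /eqP; rewrite scaler_eq0 (negbTE nzal) /= => /eqP.
  have r0 : r = 0.
    have := congr1 (mulmx^~ b) hv; rewrite /= mulmxDl -!mulmxA ab bb mulmx0 add0r mul0mx.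
    by rewrite mul_mx_scalar => /eqP; rewrite scaler_eq0 (negbTE nzbe) /= => /eqP.
  by rewrite l0 r0 row_mx0.
have sk : (col_mx a (adj b) <= kermx P)%MS.
  by apply/sub_kermxP; rewrite mul_col_mx aP bP col_mx0.
have rk : (\rank P + 2 <= n)%N.
  have := mxrankS sk; rewrite mxrank_ker; move/eqP: rf => ->.
  have := rank_leq_row P; lia.
exists P; split=> //; split.
  rewrite /projection; split; first by rewrite /P mulmxBl !mulmxBr mulmx1 mul1mx mulmx1 QQ subrr subr0.
  by change (adj P = P); rewrite /P adjB adj1 adjQ.
move=> Q0 T; left; rewrite /T /Q0 eQ; case=> m m0 hm.
pose Y0 := Q *m (e *m adj b) *m Q.
have := (hm Y0).1 (ex_intro _ (e *m adj b) erefl).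
case=> K [c [X [XT eY]]].
have eig : forall k j, exists g, a *m X k j = g *: a.
  move=> k j; have /memv_imgP [X' X'S ->] := XT k j; rewrite lfun_sw.
  exists (al^-1 * (a *m X' *m e) 0 0).
  rewrite !mulmxA aQ /Q mulmxDr -!scalemxAr !mulmxA aSb // mul0mx scaler0 addr0.
  by rewrite {1}[a *m X' *m e]mx11_scalar mul_scalar_mx scalerA.
have : a *m Y0 *m b = 0.
  rewrite eY mulmx_sumr mulmx_suml; apply: big1 => k _.
  have [g eg] := row_prod_eig (eig k).
  by rewrite -scalemxAr -scalemxAl eg -scalemxAl ab !scaler0.
rewrite /Y0 !mulmxA aQ -(mulmxA _ Q b) Qb ae -(mulmxA _ _ b) bb mul_scalar_mx.
by move/matrixP/(_ 0 0); rewrite !mxE /= mulr1n => /eqP; rewrite mulf_eq0 (negbTE nzal) (negbTE nzbe).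
Qed.

End Sep.

Lemma connected_of_gen (R : realType) n (Q : 'M[R[i]]_n) (T : {vspace 'M[R[i]]_n}) :
  (0 < n)%N -> Q *m Q = Q -> Q \in T -> (forall Y, Y \in T -> Q *m Y *m Q = Y) ->
  (forall (a : 'rV_n) (b : 'cV_n), a != 0 -> b != 0 -> a *m Q = a -> Q *m b = b ->
     exists2 Y, Y \in T & a *m Y *m b != 0) ->
  corner_connected Q T.
Proof. by case: n Q T => [//|n] Q T _; exact: connected_of. Qed.

Theorem proposition4p6 (R : realType) (n : nat) (S : {vspace 'M[R[i]]_n}) :
  quantum_graph S ->
  (k_connected S n.-1 <->
   forall A B : 'M[R[i]]_n, A != 0 -> B != 0 -> sandwich A B S != 0%VS).
Proof.
case=> adjS S1; split.
  move=> kc A B nzA nzB; apply/negP => /eqP sw0.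
  have [i Hi] := nz_row nzA; have [j Hj] := nz_col nzB.
  have aSb : forall X : 'M[R[i]]_n, X \in S -> row i A *m X *m (B *m (delta_mx j 0 : 'cV_n)) = 0.
    move=> X XS.
    have : linfun (fun Z => A *m Z *m B) X \in sandwich A B S by apply: memv_img.
    rewrite sw0 memv0 lfun_sw => /eqP h.
    by rewrite -row_mul mulmxA -row_mul h row0 mul0mx.
  have [P [sep rk]] := sep_construct Hi Hj aSb S1.
  have := kc P sep; move: rk; lia.
move=> Hc P [[PP adjP] disj]; rewrite leqNgt; apply/negP => lt.
have rk : (\rank P + 2 <= n)%N by move: lt; lia.
pose Q := 1%:M - P.
have QQ : Q *m Q = Q by rewrite /Q mulmxBl !mulmxBr mulmx1 mul1mx mulmx1 PP subrr subr0.
have rQ : (2 <= \rank Q)%N.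
  have := mxrank_add P Q; rewrite /Q addrC subrK mxrank1; lia.
have condS : forall (a : 'rV_n) (b : 'cV_n), a != 0 -> b != 0 ->
    exists2 X, X \in S & a *m X *m b != 0.
  move=> a b na nb; apply: NNPP => H.
  have nba : b *m a != 0 by apply: contra na => /eqP h; apply/eqP; exact: colv_rowv_eq0r nb h.
  move/negP: (Hc _ _ nba nba); apply; rewrite -subv0; apply/subvP => y /memv_imgP [X XS ->].
  rewrite lfun_sw memv0; apply/eqP.
  have aXb : a *m X *m b = 0.
    by apply/eqP; apply/negPn/negP => nz; apply: H; exists X.
  have -> : b *m a *m X *m (b *m a) = b *m (a *m X *m b) *m a by rewrite !mulmxA.
  by rewrite aXb mulmx0 mul0mx.
pose T := sandwich Q Q S.
have memT : forall Y, Y \in T -> exists2 X, X \in S & Y = Q *m X *m Q.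
  by move=> Y /memv_imgP [X XS ->]; exists X; rewrite ?lfun_sw.
have QT : Q \in T.
  have : linfun (fun Z => Q *m Z *m Q) 1%:M \in T by apply: memv_img.
  by rewrite lfun_sw mulmx1 QQ.
have TC : forall Y, Y \in T -> Q *m Y *m Q = Y.
  by move=> Y /memT [X _ ->]; rewrite -!mulmxA QQ !mulmxA QQ.
have condT : forall (a : 'rV_n) (b : 'cV_n), a != 0 -> b != 0 -> a *m Q = a -> Q *m b = b ->
    exists2 Y, Y \in T & a *m Y *m b != 0.
  move=> a b na nb aQ Qb; have [X XS nz] := condS a b na nb.
  exists (Q *m X *m Q).
    have : linfun (fun Z => Q *m Z *m Q) X \in T by apply: memv_img.
    by rewrite lfun_sw.
  by rewrite !mulmxA aQ -mulmxA Qb.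
case: disj => [ncc|dim1].
  apply: ncc; apply: connected_of_gen => //; move: rk; lia.
have [c [d [nzc [nzd dQc]]]] := L_ab rQ.
have aQ : d *m Q *m Q = d *m Q by rewrite -mulmxA QQ.
have Qb : Q *m (Q *m c) = Q *m c by rewrite mulmxA QQ.
have [Y YT nz] := condT _ _ nzd nzc aQ Qb.
have nzQ : Q != 0 by rewrite -mxrank_eq0 -lt0n (leq_trans _ rQ).
have sub : (<[Q]> <= T)%VS by rewrite -memvE.
have [_ e] := dimv_leqif_eq sub.
move: e; rewrite dim_vline nzQ dim1 eqxx => /esym/eqP eT.
move: YT nz; rewrite -eT => /vlineP [g ->].
have -> : d *m Q *m (g *: Q) *m (Q *m c) = g *: (d *m Q *m c).
  by rewrite -scalemxAr -scalemxAl -!mulmxA Qb Qb.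
move=> h; move/negP: h; apply; rewrite scaler_eq0; apply/orP; right; apply/eqP; exact: dQc.
Qed.
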